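(* Let $y$ be a string. For any $x\in\mathrm{Substr}(y)$, if $x\in\mathcal{R}$ (i.e., $x$ is represented by a black node of $\mathrm{AST}(y)$), then every prefix of $x$ also belongs to $\mathcal{R}$ (i.e., is represented by a black node of $\mathrm{AST}(y)$).
   Context: $\mathrm{Substr}(y)$ is the set of substrings of $y$. $\mathrm{EndPos}(x)=\{i\mid y[i-|x|+1..i]=x\}$; for $x\in\mathrm{Substr}(y)$, $\overleftarrow{x}$ denotes the longest string $z$ with $\mathrm{EndPos}(z)=\mathrm{EndPos}(x)$, and $\mathcal{R}=\{\overleftarrow{x}\mid x\in\mathrm{Substr}(y)\}$. Similarly, with $\mathrm{BegPos}(x)=\{i\mid y[i..i+|x|-1]=x\}$, $\overrightarrow{x}$ is the longest $z$ with $\mathrm{BegPos}(z)=\mathrm{BegPos}(x)$ and $\mathcal{L}=\{\overrightarrow{x}\mid x\in\mathrm{Substr}(y)\}$. $\mathrm{AST}(y)$ is the rooted tree on node set $\mathcal{L}\cup\mathcal{R}$ in which the parent of each non-root node $z$ is its longest proper prefix in $\mathcal{L}\cup\mathcal{R}$ (edge labeled by the remaining suffix); a node is black iff it belongs to $\mathcal{R}$. *)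

(* Defs.v *)
From mathcomp Require Import all_boot.
Set Implicit Arguments. Unset Strict Implicit. Unset Printing Implicit Defensive.

(* Strings over an alphabet A (an eqType) are sequences; positions in y are
   1-indexed, 1..|y| (0 allowed as end position of the empty string). *)
Section Strings.
Variable A : eqType.

(* y[i..j] (1-indexed, inclusive) = drop (i-1) (take j y) *)
Definition substr_occ (y x : seq A) (i : nat) : bool :=
  (size x <= i <= size y) && (take (size x) (drop (i - size x) y) == x).

Definition is_substr (y x : seq A) : Prop := infix x y.

(* EndPos(x) = { i | y[i-|x|+1..i] = x } *)
Definition EndPos (y x : seq A) : pred nat := fun i => substr_occ y x i.

Definition is_left_ext (y x z : seq A) : Prop :=
  EndPos y z =1 EndPos y x /\
  forall w : seq A, EndPos y w =1 EndPos y x -> size w <= size z.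

Definition inR (y z : seq A) : Prop :=
  exists x : seq A, is_substr y x /\ is_left_ext y x z.
End Strings.

(* Main.v *)
Require Import Defs.
From mathcomp Require Import all_boot.

Lemma occE (A : eqType) (y x : seq A) i :
  substr_occ y x i = (i <= size y) && suffix x (take i y).
Proof.
rewrite /substr_occ suffixE.
case: (leqP i (size y)) => Hi; last first.
  by rewrite andbF.
rewrite andbT /= size_takel //.
case: (leqP (size x) i) => Hx /=.
  by rewrite take_drop subnKC.
case: eqP => // E.
have : size (drop (i - size x) (take i y)) = size x by rewrite E.
rewrite size_drop size_takel // => E2.
by move: (leq_ltn_trans (leq_subr (i - size x) i) Hx); rewrite E2 ltnn.
Qed.

Lemma suffix_sizes (A : eqType) (a b t : seq A) :
  suffix a t -> suffix b t -> size a <= size b -> suffix a b.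
Proof.
move=> /suffixP[u ->] /suffixP[v E] Hab.
have Hs : size v + size b = size u + size a by rewrite -!size_cat E.
have Hvu : size v <= size u.
  by rewrite -(leq_add2r (size b)) Hs leq_add2l.
move: E; rewrite -(cat_take_drop (size v) u) -catA => /eqP.
rewrite eqseq_cat ?size_takel // => /andP[_ /eqP <-].
exact: suffix_suffix.
Qed.

Theorem lemma4 (A : eqType) (y x : seq A) :
  is_substr y x -> inR y x ->
  forall p : seq A, prefix p x -> inR y p.
Proof.
move=> Hx [x0 [_ [HE Hmax]]] p Hp.
have Hpy : infix p y by apply: infix_trans (prefixW Hp) Hx.
exists p; split => //; split => // w Hw.
rewrite leqNgt; apply/negP => Hlt.
have [u [v Ey]] := infixP Hpy.
have Hj : EndPos y p (size u + size p).
  rewrite /EndPos occE Ey catA take_size_cat ?size_cat // suffix_suffix andbT; idtac.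
  exact: leq_addr.
move: (Hj); rewrite -Hw /EndPos occE => /andP[_ Hwj].
move: Hj; rewrite /EndPos occE => /andP[_ Hpj].
have /suffixP[a Ew] := @suffix_sizes _ _ _ _ Hpj Hwj (ltnW Hlt).
have [s Ex] := prefixP Hp.
have Hz : EndPos y (a ++ x) =1 EndPos y x0.
  move=> i; rewrite -HE /EndPos !occE.
  case Hi: (i <= size y) => //=.
  apply/idP/idP; first exact: catl_suffix.
  rewrite Ex => /suffixP[u' Et].
  have Hsz : size (take i y) = i by rewrite size_takel.
  have Hk : take (i - size s) y = u' ++ p.
    have -> : take (i - size s) y = take (i - size s) (take i y).
      by rewrite -take_min (minn_idPl (leq_subr _ _)).
    by rewrite Et catA take_size_cat // -Hsz Et catA !size_cat addnK.
  have : substr_occ y p (i - size s).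
    rewrite occE Hk suffix_suffix andbT.
    exact: leq_trans (leq_subr _ _) Hi.
  rewrite -[substr_occ _ _ _]/(EndPos y p _) -Hw /EndPos occE Hk Ew => /andP[_].
  rewrite suffix_catl // eqxx /= => /suffixP[v' Eu].
  by rewrite Et Eu -!catA suffix_suffix.
move: (Hmax _ Hz); rewrite size_cat.
have : 0 < size a.
  by rewrite Ew size_cat in Hlt; move: Hlt; case: (size a) => //=; rewrite add0n ltnn.
by move=> Ha; rewrite -{2}(add0n (size x)) leq_add2r leqNgt Ha.
Qed.
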